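(* For every $0<\delta\le1$ and $0<\epsilon\le1$ there exist $n$, $m$, a preference profile $\sigma$, and two distributions $\mathcal{D}_1,\mathcal{D}_2$ supported on $[0,1]$ with total variation distance at most $\epsilon$ such that every alternative $j$ maximizing $\mathbb{E}_{\mathcal{D}_1}[\mathrm{sw}(j,u)]$ at $\sigma$ satisfies $\mathbb{E}_{\mathcal{D}_2}[\mathrm{sw}(j,u)]<\delta\max_{k\in A}\mathbb{E}_{\mathcal{D}_2}[\mathrm{sw}(k,u)]$; i.e., the expected-welfare-maximizing rule for $\mathcal{D}_1$ is not a $\delta$-expected-welfare-maximizing rule for $\mathcal{D}_2$.
   Context: There are $n$ voters and $m$ alternatives $A=\{1,\dots,m\}$. A preference profile $\sigma$ consists of a ranking of $A$ for each voter. Given a distribution $\mathcal{D}$ and profile $\sigma$, a random utility profile $u$ consistent with $\sigma$ is generated as follows: independently for each voter $i$, draw $m$ i.i.d. samples from $\mathcal{D}$ and assign them, from highest to lowest, to the alternatives in the order of voter $i$'s ranking. The social welfare of $j$ is $\mathrm{sw}(j,u)=\sum_i u_{ij}$; $\mathbb{E}_{\mathcal{D}}$ is expectation over $u$ generated with $\mathcal{D}$. *)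

(* Defs.v *)
From HB Require Import structures.
From mathcomp Require Import all_boot all_order all_algebra perm.
From mathcomp Require Import all_classical all_reals all_analysis.
Set Implicit Arguments. Unset Strict Implicit. Unset Printing Implicit Defensive.
Import Order.TTheory GRing.Theory Num.Theory.
Local Open Scope classical_set_scope.
Local Open Scope ring_scope.
Local Open Scope ereal_scope.

Section Defs.
Variable R : realType.

Definition supported01 (P : probability R R) : Prop := P [set x : R | (0 <= x <= 1)%R] = 1.

Definition tv_dist (P Q : probability R R) : \bar R :=
  ereal_sup [set `|P A - Q A| | A in [set A : set R | measurable A]].

(* Expectation of f(X_1,...,X_N) where X_1,...,X_N are i.i.d. with law P,
   written as the iterated integral (first coordinate outermost). *)
Fixpoint iid_expect (P : probability R R) (N : nat) (f : seq R -> \bar R)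
  : \bar R :=
  match N with
  | 0 => f [::]
  | N'.+1 => \int[P]_x iid_expect P N' (fun s => f (x :: s))
  end.

(* A preference profile: voter i's ranking sigma i maps a position k
   (k = 0 is the top) to the alternative ranked k-th. *)
Definition profile (n m : nat) := 'I_n -> {perm 'I_m}.

(* Utility of voter i for alternative j, given the sequence s of n*m draws:
   voter i uses draws i*m, ..., i*m+m-1, sorted from highest to lowest and
   assigned along the ranking sigma i. *)
Definition utility (n m : nat) (sigma : profile n m) (s : seq R)
  (i : 'I_n) (j : 'I_m) : R :=
  nth 0%R (sort (fun x y : R => (y <= x)%R) (take m (drop (i * m) s)))
      ((sigma i)^-1%g j).

Definition sw (n m : nat) (sigma : profile n m) (s : seq R) (j : 'I_m) : R :=
  (\sum_(i < n) utility sigma s i j)%R.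

Definition exp_sw (P : probability R R) (n m : nat) (sigma : profile n m)
  (j : 'I_m) : \bar R :=
  iid_expect P (n * m) (fun s => (sw sigma s j)%:E).

End Defs.

(* Main.v *)
Require Import Defs.
From HB Require Import structures.
From mathcomp Require Import all_boot all_order all_algebra perm.
From mathcomp Require Import all_classical all_reals all_analysis.
From mathcomp Require Import measurable_realfun.
From mathcomp Require Import ring lra.
Import Order.TTheory GRing.Theory Num.Theory.
Local Open Scope ring_scope.

Section DE.
Variable R : realType.

Definition geR := fun x y : R => (y <= x)%R.
Definition b01 (x : R) := (x == 0) || (x == 1).
Definition cnt (s : seq R) := count (fun x => x == 1) s.

Lemma cnt0 s : cnt (0 :: s) = cnt s.
Proof. by rewrite /cnt /= eq_sym oner_eq0. Qed.
Lemma cnt1 s : cnt (1 :: s) = (cnt s).+1.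
Proof. by rewrite /cnt /= eqxx. Qed.
Lemma cnt_le s : (cnt s <= size s)%N.
Proof. exact: count_size. Qed.

Lemma sorted_cons_ge x t : sorted geR (x :: t) = geR x (head x t) && sorted geR t.
Proof. by case: t => [|y t] /=; rewrite ?andbT // /geR lexx. Qed.

Lemma sorted10 c k : sorted geR (nseq c 1 ++ nseq k 0).
Proof.
elim: c => [|c IH] /=.
  elim: k => [|k IHk] //=.
  by rewrite -/(sorted geR (0 :: nseq k 0)) sorted_cons_ge IHk andbT; case: k {IHk} => /=; rewrite /geR lexx.
rewrite -/(sorted geR (1 :: (nseq c 1 ++ nseq k 0))) sorted_cons_ge IH andbT.
by case: c {IH} => [|c] /=; case: k => [|k] /=; rewrite /geR ?lexx ?ler01.
Qed.

Lemma perm10 s : all b01 s -> perm_eq s (nseq (cnt s) 1 ++ nseq (size s - cnt s) 0).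
Proof.
elim: s => [|x s IH] // /andP[/orP[]/eqP-> al].
  rewrite cnt0 /= subSn ?cnt_le //.
  rewrite (_ : nseq (size s - cnt s).+1 (0:R) = [:: 0] ++ nseq (size s - cnt s) 0) // perm_sym perm_catCA /= perm_cons perm_sym.
  exact: IH.
by rewrite cnt1 /= subSS perm_cons; exact: IH.
Qed.

Lemma sort01 s : all b01 s -> sort geR s = nseq (cnt s) 1 ++ nseq (size s - cnt s) 0.
Proof.
move=> al.
have tr : transitive geR by move=> a b c h1 h2; exact: le_trans h2 h1.
have an : antisymmetric geR by move=> a b /andP[h1 h2]; apply/eqP; rewrite /geR in h1 h2; rewrite eq_le h1 h2.
have to : total geR by move=> a b; rewrite /geR le_total.
apply: (sorted_eq tr an); first exact: sort_sorted.
  exact: sorted10.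
by rewrite perm_sort; exact: perm10.
Qed.

Lemma nth_sort01 s r : all b01 s -> nth 0 (sort geR s) r = if (r < cnt s)%N then 1 else 0.
Proof.
move=> al; rewrite sort01 // nth_cat size_nseq.
by case: ifP => h; rewrite nth_nseq ?h //; case: ifP.
Qed.


Section DEq.
Variable q : R.

Fixpoint dE (N : nat) (h : seq R -> R) : R :=
  match N with
  | 0 => h [::]
  | N'.+1 => (1 - q) * dE N' (fun s => h (0 :: s)) + q * dE N' (fun s => h (1 :: s))
  end.

Lemma dE_ext N h h' : (forall s, size s = N -> all b01 s -> h s = h' s) ->
  dE N h = dE N h'.
Proof.
elim: N h h' => [|N IH] h h' H /=; first exact: H.
congr (_ * _ + _ * _); apply: IH => s sz al; apply: H => /=; rewrite ?sz ?al ?andbT //.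
- by rewrite /b01 eqxx.
- by rewrite /b01 eqxx orbT.
Qed.

Lemma dE_cst N c : dE N (fun _ => c) = c.
Proof. elim: N => [|N IH] //=; rewrite IH; ring. Qed.

Lemma dE_add N h h' : dE N (fun s => h s + h' s) = dE N h + dE N h'.
Proof. elim: N h h' => [|N IH] h h' //=; rewrite !IH; ring. Qed.

Lemma dE_scale N c h : dE N (fun s => c * h s) = c * dE N h.
Proof. elim: N h => [|N IH] h //=; rewrite !IH; ring. Qed.

Lemma dE_sum N (I : finType) (F : I -> seq R -> R) :
  dE N (fun s => \sum_i F i s) = \sum_i dE N (F i).
Proof.
elim: N F => [|N IH] F //=.
rewrite (IH (fun i s => F i (0 :: s))) (IH (fun i s => F i (1 :: s))).
by rewrite !mulr_sumr -big_split.
Qed.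

Lemma dE_drop a N h : dE (a + N) (fun s => h (drop a s)) = dE N h.
Proof.
elim: a h => [|a IH] h.
  by apply: dE_ext => s _ _; rewrite drop0.
rewrite addSn /= !IH; ring.
Qed.

Lemma dE_take N b h : dE (N + b) (fun s => h (take N s)) = dE N h.
Proof.
elim: N h => [|N IH] h.
  rewrite add0n /= -[RHS](dE_cst b (h [::])); by apply: dE_ext => s _ _; rewrite take0.
rewrite addSn /=; congr (_ * _ + _ * _).
  exact: (IH (fun t => h (0 :: t))).
exact: (IH (fun t => h (1 :: t))).
Qed.

Lemma dE_block n m (i : nat) F : (i < n)%N ->
  dE (n * m) (fun s => F (take m (drop (i * m) s))) = dE m F.
Proof.
move=> lt_in.
have -> : (n * m = i * m + (m + (n - i.+1) * m))%N.
  by rewrite addnA -[(i * m + m)%N]mulSnr -mulnDl subnKC.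
by rewrite (dE_drop (i * m) _ (fun t => F (take m t))) dE_take.
Qed.


Lemma dE_S N h : dE N.+1 h = (1 - q) * dE N (fun s => h (0 :: s)) + q * dE N (fun s => h (1 :: s)).
Proof. by []. Qed.

Lemma dE_eq N {h h'} : h =1 h' -> dE N h = dE N h'.
Proof. by move=> e; apply: dE_ext => s _ _; exact: e. Qed.

Lemma dE_sub N h h' : dE N (fun s => h s - h' s) = dE N h - dE N h'.
Proof. elim: N h h' => [|N IH] h h' //=; rewrite !IH; ring. Qed.

Lemma dE_cnt N : dE N (fun s => (cnt s)%:R) = N%:R * q.
Proof.
elim: N => [|N IH]; first by rewrite /= mul0r.
rewrite dE_S.
rewrite (dE_eq N (h := fun s => (cnt (0 :: s))%:R) (h' := fun s => (cnt s)%:R)); last by move=> s; rewrite cnt0.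
rewrite (dE_eq N (h := fun s => (cnt (1 :: s))%:R) (h' := fun s => 1 + (cnt s)%:R)); last by move=> s; rewrite cnt1 mulrS.
rewrite dE_add dE_cst IH mulrS; ring.
Qed.

Lemma dE_P0 N : dE N (fun s => (cnt s == 0)%N%:R) = (1 - q) ^+ N.
Proof.
elim: N => [|N IH]; first by rewrite /= expr0.
rewrite dE_S.
rewrite (dE_eq N (h := fun s => (cnt (0%R :: s) == 0)%N%:R) (h' := fun s => (cnt s == 0)%N%:R)); last by move=> s; rewrite cnt0.
rewrite (dE_eq N (h := fun s => (cnt (1%R :: s) == 0)%N%:R) (h' := fun s => 0)); last by move=> s; rewrite cnt1.
by rewrite dE_cst IH exprS mulr0 addr0.
Qed.

Lemma dE_P1 N : dE N (fun s => (cnt s == 1)%N%:R) = N%:R * q * (1 - q) ^+ N.-1.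
Proof.
elim: N => [|N IH]; first by rewrite /= mul0r mul0r.
rewrite dE_S.
rewrite (dE_eq N (h := fun s => (cnt (0%R :: s) == 1)%N%:R) (h' := fun s => (cnt s == 1)%N%:R)); last by move=> s; rewrite cnt0.
rewrite (dE_eq N (h := fun s => (cnt (1%R :: s) == 1)%N%:R) (h' := fun s => (cnt s == 0)%N%:R)); last by move=> s; rewrite cnt1.
rewrite IH dE_P0; case: N {IH} => [|N] /=; first by rewrite !expr0; ring.
rewrite exprS mulrS; ring.
Qed.

Definition Tq N := dE N (fun s => (1 < cnt s)%N%:R).
Definition Uq N := dE N (fun s => (0 < cnt s)%N%:R).

Lemma TqE N : Tq N = 1 - (1 - q) ^+ N - N%:R * q * (1 - q) ^+ N.-1.
Proof.
rewrite /Tq (dE_eq N (h' := fun s => (1 - (cnt s == 0)%N%:R) - (cnt s == 1)%N%:R)).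
  by rewrite !dE_sub dE_cst dE_P0 dE_P1.
by move=> s; case: (cnt s) => [|[|c]] /=; ring.
Qed.

Hypothesis hq : 0 <= q <= 1.

Lemma dE_ge0 N h : (forall s, 0 <= h s) -> 0 <= dE N h.
Proof.
case/andP: hq => q0 q1.
elim: N h => [|N IH] h h0 //=.
by apply: addr_ge0; apply: mulr_ge0; rewrite ?subr_ge0 //; apply: IH.
Qed.

Lemma Uq_le N : Uq N <= N%:R * q.
Proof.
case/andP: hq => q0 q1.
elim: N => [|N IH]; first by rewrite /Uq /= mul0r.
rewrite /Uq dE_S.
rewrite (dE_eq N (h := fun s => (0 < cnt (0%R :: s))%N%:R) (h' := fun s => (0 < cnt s)%N%:R)); last by move=> s; rewrite cnt0.
rewrite (dE_eq N (h := fun s => (0 < cnt (1%R :: s))%N%:R) (h' := fun s => 1)); last by move=> s; rewrite cnt1.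
rewrite dE_cst -/(Uq N).
have U0 : 0 <= Uq N by apply: dE_ge0 => s; exact: ler0n.
rewrite mulrS; nra.
Qed.

Lemma Tq_le N : Tq N <= (N%:R * q) ^+ 2.
Proof.
case/andP: hq => q0 q1.
elim: N => [|N IH]; first by rewrite /Tq /= mul0r expr0n.
rewrite /Tq dE_S.
rewrite (dE_eq N (h := fun s => (1 < cnt (0%R :: s))%N%:R) (h' := fun s => (1 < cnt s)%N%:R)); last by move=> s; rewrite cnt0.
rewrite (dE_eq N (h := fun s => (1 < cnt (1%R :: s))%N%:R) (h' := fun s => (0 < cnt s)%N%:R)); last by move=> s; rewrite cnt1.
rewrite -/(Tq N) -/(Uq N).
have T0 : 0 <= Tq N by apply: dE_ge0 => s; exact: ler0n.
have U := Uq_le N.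
have N0 : 0 <= N%:R :> R by exact: ler0n.
rewrite mulrS; nra.
Qed.

Lemma bern_ineq j : (1 - q) ^+ j * (1 + j%:R * q) <= 1.
Proof.
case/andP: hq => q0 q1.
elim: j => [|j IH]; first by rewrite expr0 mul0r addr0 mulr1.
have z0 : 0 <= (1 - q) ^+ j by apply: exprn_ge0; rewrite subr_ge0.
have j0 : 0 <= j%:R :> R by exact: ler0n.
have hint : 0 <= (1 - q) ^+ j * (q ^+ 2 * (1 + j%:R)).
  by apply: mulr_ge0 => //; apply: mulr_ge0; [exact: sqr_ge0 | lra].
rewrite exprSr mulrS; nra.
Qed.

Lemma Tq_ge j : 3 <= j%:R * q -> 1 / 2 <= Tq (j.*2.+1).
Proof.
case/andP: hq => q0 q1 hj.
have hz := bern_ineq j.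
have z0 : 0 <= (1 - q) ^+ j by apply: exprn_ge0; rewrite subr_ge0.
rewrite TqE /=.
have e1 : (1 - q) ^+ (j.*2.+1) = ((1 - q) ^+ j) ^+ 2 * (1 - q).
  by rewrite exprS -addnn exprD expr2 mulrC.
have e2 : (1 - q) ^+ (j.*2) = ((1 - q) ^+ j) ^+ 2.
  by rewrite -addnn exprD expr2.
have e3 : (j.*2.+1)%:R = 1 + 2 * j%:R :> R.
  by rewrite -addnn mulrS natrD mulr2n mulrDl mul1r.
rewrite e1 e2 e3.
move: hz hj z0; set z := (1 - q) ^+ j; set y := j%:R * q => hz hj z0.
have h1 : (z * (1 + y)) ^+ 2 <= 1.
  have x0 : 0 <= z * (1 + y) by apply: mulr_ge0 => //; lra.
  move: hz x0; set x := z * (1 + y) => hz x0; nra.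
have h2 : 2 * (1 + 2 * y) <= (1 + y) ^+ 2 by nra.
have h3 : z ^+ 2 * (2 * (1 + 2 * y)) <= 1.
  apply: le_trans h1; rewrite exprMn; apply: ler_wpM2l => //; exact: sqr_ge0.
have -> : (1 + 2 * j%:R) * q = 1 * q + 2 * y by rewrite /y; ring.
lra.
Qed.

End DEq.
End DE.
Arguments dE {R}.
Arguments geR {R}.
Arguments b01 {R}.
Arguments Tq {R}.
Arguments Uq {R}.
Arguments cnt {R}.

Local Open Scope classical_set_scope.

Section Bern.
Variable R : realType.
Variable q : R.
Hypothesis hq : 0 <= q <= 1.

Let q0 : {nonneg R} := NngNum (proj1 (andP hq)).
Let q1' : 0 <= 1 - q. Proof. by rewrite subr_ge0; case/andP: hq. Qed.
Let q1 : {nonneg R} := NngNum q1'.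

Definition bernm := measure_add (mscale q1 (@dirac _ R 0 R)) (mscale q0 (@dirac _ R 1 R)).

Lemma bernmE A : bernm A = ((1 - q) * (0 \in A)%:R + q * (1 \in A)%:R)%:E.
Proof.
rewrite /bernm measure_addE.
change (((1-q)%:E * (\1_A (0:R))%:E + q%:E * (\1_A (1:R))%:E) = ((1 - q) * (0 \in A)%:R + q * (1 \in A)%:R)%:E)%E.
by rewrite !indicE -!EFinM -EFinD.
Qed.

Lemma bernm_setT
 : bernm setT = 1%E.
Proof. by rewrite bernmE !in_setT /= !mulr1 subrK. Qed.

HB.instance Definition _ := Measure.copy bernm (measure_add (mscale q1 (@dirac _ R 0 R)) (mscale q0 (@dirac _ R 1 R))).
HB.instance Definition _ := Measure_isProbability.Build _ _ _ bernm bernm_setT.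

Definition bern : probability R R := bernm.

End Bern.
Arguments bern {R q}.
Arguments bernm {R q}.


Local Open Scope ereal_scope.
Lemma integral_mono_nm (R : realType) d (T : measurableType d) (mu : {measure set T -> \bar R})
  (f g : T -> \bar R) : (forall x, 0 <= g x) -> (forall x, g x <= f x) ->
  \int[mu]_x g x <= \int[mu]_x f x.
Proof.
move=> g0 gf.
have f0 : forall x, 0 <= f x by move=> x; exact: le_trans (g0 x) (gf x).
rewrite !ge0_integralTE//.
apply: le_ereal_sup => _ [h hg <-]; exists h => //= x.
exact: le_trans (hg x) (gf x).
Qed.

Import HBNNSimple.
Lemma in1T (R : realType) (a : R) : (a \in [set a]) = true.
Proof. by apply/mem_set. Qed.
Lemma in1F (R : realType) (a b : R) : a != b -> (a \in [set b]) = false.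
Proof. by move=> /eqP ab; apply/negbTE; rewrite notin_setE. Qed.
Section BernInt.
Variable R : realType.
Variable q : R.
Hypothesis hq : (0 <= q <= 1)%R.

Lemma bern_int_meas (g : R -> \bar R) : (forall x, 0 <= g x) -> measurable_fun setT g ->
  \int[bern hq]_x g x = (1 - q)%:E * g 0%R + q%:E * g 1%R.
Proof.
move=> g0 mg.
rewrite /bern /bernm ge0_integral_measure_add//.
rewrite !ge0_integral_mscale//= !integral_dirac// !diracE !in_setT !mul1e.
by [].
Qed.


Lemma bern_int_ge0 (f : R -> \bar R) : (forall x, 0 <= f x) ->
  f 0%R \is a fin_num -> f 1%R \is a fin_num ->
  \int[bern hq]_x f x = (1 - q)%:E * f 0%R + q%:E * f 1%R.
Proof.
move=> f0 f0f f1f.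
have hq0 : (0 <= q)%R by case/andP: hq.
have hq1 : (0 <= 1 - q)%R by rewrite subr_ge0; case/andP: hq.
apply/eqP; rewrite eq_le; apply/andP; split.
  rewrite ge0_integralTE//; apply: ge_ereal_sup => _ [h hf <-].
  rewrite -integralT_nnsfun bern_int_meas//; last first.
    apply/measurable_EFinP; exact: measurable_funPT.
    by move=> x; rewrite lee_fin; exact: fun_ge0.
  by apply: leeD; apply: lee_pmul => //; rewrite lee_fin.
pose g (x : R) := ((fine (f 0%R)) * \1_[set 0%R] x + fine (f 1%R) * \1_[set 1%R] x)%R%:E.
have g0 : forall x, 0 <= g x.
  move=> x; rewrite /g lee_fin addr_ge0 // mulr_ge0 //; rewrite ?fine_ge0//.
have h01 : (0%R:R) != 1%R by rewrite eq_sym oner_neq0.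
have h10 : (1%R:R) != 0%R by rewrite oner_neq0.
have gf : forall x, g x <= f x.
  move=> x; rewrite /g !indicE.
  have [->|x0] := eqVneq x 0%R.
    by rewrite in1T in1F ?h01 // mulr1 mulr0 addr0 fineK.
  have [->|x1] := eqVneq x 1%R.
    by rewrite in1T in1F ?h10 // mulr1 mulr0 add0r fineK.
  by rewrite !in1F // mulr0 mulr0 addr0.
have H := @integral_mono_nm _ _ _ (bern hq) _ _ g0 gf.
refine (le_trans _ H).
rewrite bern_int_meas//; last first.
  apply/measurable_EFinP; apply: measurable_funD; apply: measurable_funM => //;
  exact: measurable_indic.
rewrite /g !indicE !in1T !in1F ?h01 ?h10 //.
by rewrite mulr1 mulr0 addr0 mulr0 mulr1 add0r !fineK.
Qed.

Lemma bern_int (F : R -> R) :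
  \int[bern hq]_x (F x)%:E = ((1 - q) * F 0%R + q * F 1%R)%:E.
Proof.
have ep x : ((EFin \o F)^\+ x) = (Num.max (F x) 0%R)%:E.
  by rewrite funeposE EFin_max.
have en x : ((EFin \o F)^\- x) = (Num.max (- F x) 0%R)%:E.
  by rewrite funenegE -EFinN EFin_max.
rewrite integralE !bern_int_ge0 //; last 4 first.
- by rewrite en.
- by rewrite en.
- by rewrite ep.
- by rewrite ep.
rewrite !ep !en -!EFinM -!EFinD; congr (_%:E).
have mx (y : R) : (Num.max y 0 - Num.max (- y) 0 = y)%R.
  rewrite /Num.max; case: ifPn => h1; case: ifPn => h2; rewrite -?leNgt in h1 h2; lra.
have h0 := mx (F 0%R); have h1 := mx (F 1%R).
set a := (Num.max (F 0) 0)%R in h0 *; set b := (Num.max (- F 0) 0)%R in h0 *.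
set c := (Num.max (F 1) 0)%R in h1 *; set e := (Num.max (- F 1) 0)%R in h1 *.
rewrite -h0 -h1; ring.
Qed.
End BernInt.

Close Scope classical_set_scope.

Lemma iid_dE (R : realType) (q : R) (hq : (0 <= q <= 1)%R) N (h : seq R -> R) :
  iid_expect (bern hq) N (fun s => (h s)%:E) = (dE q N h)%:E.
Proof.
elim: N h => [|N IH] h //=.
under eq_integral => x _ do rewrite IH.
exact: bern_int.
Qed.

Section Profile.
Variable R : realType.
Variable k : nat.
Local Open Scope ring_scope.

Definition pos1 : 'I_k.+2 := lift ord0 (ord0 : 'I_k.+1).
Definition tau (i : 'I_k.+1) : {perm 'I_k.+2} := lift_perm ord0 pos1 (perm (@addrI _ i)).
Definition sig : profile k.+1 k.+2 := fun i => (tau i)^-1%g.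

Definition mu (q : R) (r : nat) := dE q k.+2 (fun t => nth 0 (sort geR t) r).

Lemma exp_sw_mu q (hq : 0 <= q <= 1) (j : 'I_k.+2) :
  exp_sw (bern hq) sig j = (\sum_(i < k.+1) mu q (tau i j))%:E.
Proof.
rewrite /exp_sw /sw iid_dE; congr (_%:E).
rewrite dE_sum; apply: eq_bigr => i _.
rewrite /utility /sig invgK.
by apply: dE_block.
Qed.

Lemma mu_cnt q r : mu q r = dE q k.+2 (fun t => (r < cnt t)%N%:R).
Proof.
apply: dE_ext => s _ al; rewrite nth_sort01 //; by case: ifP.
Qed.

Lemma mu1 q : mu q 1 = Tq q k.+2.
Proof. by rewrite mu_cnt. Qed.

Lemma sum_lt (c m : nat) : (\sum_(r < m) ((r < c) : nat) = minn c m)%N.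
Proof.
elim: m => [|m IH]; first by rewrite big_ord0 minn0.
rewrite big_ord_recr /= IH.
case: (ltnP m c) => h.
  have -> : minn c m.+1 = m.+1 by apply/minn_idPr.
  by rewrite addn1.
have -> : minn c m.+1 = c by apply/minn_idPl; exact: leqW.
by rewrite addn0.
Qed.

Lemma mu_sum q : \sum_(r < k.+2) mu q r = k.+2%:R * q.
Proof.
under eq_bigr do rewrite mu_cnt.
rewrite -dE_sum -dE_cnt; apply: dE_ext => s sz _.
rewrite -natr_sum sum_lt; congr (_%:R).
by apply/minn_idPl; rewrite -sz cnt_le.
Qed.

Lemma E_b q : \sum_(i < k.+1) mu q (tau i ord0) = k.+1%:R * Tq q k.+2.
Proof.
under eq_bigr do rewrite lift_perm_id.
by rewrite mu1 sumr_const card_ord mulr_natl.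
Qed.

Lemma E_a q k' : \sum_(i < k.+1) mu q (tau i (lift ord0 k')) = k.+2%:R * q - Tq q k.+2.
Proof.
under eq_bigr do rewrite lift_perm_lift permE.
have -> : \sum_(i < k.+1) mu q (lift pos1 (i + k')) = \sum_(i < k.+1) mu q (lift pos1 i).
  by rewrite [RHS](reindex_inj (addIr k')).
rewrite -mu_sum (bigD1_ord pos1) //= mu1; ring.
Qed.

End Profile.

Lemma bern_supp (R : realType) (q : R) (hq : (0 <= q <= 1)%R) : supported01 (bern hq).
Proof.
rewrite /supported01; apply: (eq_trans (bernmE _ _ hq _)).
have i0 : (0%R \in [set x : R | (0 <= x <= 1)%R]%classic) = true.
  by apply/mem_set; rewrite /= lexx ler01.
have i1 : (1%R \in [set x : R | (0 <= x <= 1)%R]%classic) = true.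
  by apply/mem_set; rewrite /= lexx ler01.
by rewrite i0 i1 /= !mulr1 subrK.
Qed.

Lemma bern_tv (R : realType) (q p eps : R) (hq : (0 <= q <= 1)%R) (hp : (0 <= p <= 1)%R) :
  (q <= eps)%R -> (p <= eps)%R -> (tv_dist (bern hq) (bern hp) <= eps%:E)%E.
Proof.
move=> qe pe; rewrite /tv_dist; apply: ge_ereal_sup => _ [A mA <-].
have -> : bern hq A = (((1 - q) * (0%R \in A)%:R + q * (1%R \in A)%:R)%R)%:E by exact: bernmE.
have -> : bern hp A = (((1 - p) * (0%R \in A)%:R + p * (1%R \in A)%:R)%R)%:E by exact: bernmE.
rewrite -EFinB /= lee_fin.
case/andP: hq => q0 q1; case/andP: hp => p0 p1.
by case: (0%R \in A); case: (1%R \in A) => /=; rewrite ler_norml; apply/andP; split; lra.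
Qed.

Theorem theorem11 (R : realType) (delta eps : R) :
  (0 < delta <= 1)%R -> (0 < eps <= 1)%R ->
  exists (n m : nat) (sigma : profile n m) (D1 D2 : probability R R),
    (0 < m)%N /\ supported01 D1 /\ supported01 D2 /\
    (tv_dist D1 D2 <= eps%:E)%E /\
    forall j : 'I_m,
      (forall k : 'I_m, (exp_sw D1 sigma k <= exp_sw D1 sigma j)%E) ->
      (exp_sw D2 sigma j < delta%:E * \big[maxe/-oo]_(k < m) exp_sw D2 sigma k)%E.
Proof.
Local Open Scope ring_scope.
move=> /andP[d0 d1] /andP[e0 e1].
pose q := eps / 4.
have q0 : 0 < q by rewrite /q divr_gt0.
have hq : 0 <= q <= 1 by apply/andP; split; rewrite /q; lra.
pose j := (Num.truncn (3 / q)).+1.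
have hj : 3 <= j%:R * q.
  have := truncnS_gt (3 / q); rewrite -/j => h.
  rewrite -ler_pdivrMr //; exact: ltW.
have j1 : (0 < j)%N by [].
pose k := (j.*2).-1.
have km : k.+2 = j.*2.+1.
  by rewrite /k prednK // double_gt0.
pose M : R := (k.+2)%:R.
have M1 : 1 <= M by rewrite /M ler1n.
have Mj : j%:R <= M by rewrite /M km ler_nat -addnn; apply: leqW; exact: leq_addr.
have Meps : 12 <= M * eps.
  have : 3 <= M * q by apply: le_trans hj _; apply: ler_wpM2r => //; exact: ltW.
  rewrite /q; lra.
pose p := delta / (4 * M ^+ 2).
have M2 : 0 < 4 * M ^+ 2 by apply: mulr_gt0 => //; apply: exprn_gt0; lra.
have pM : p * (4 * M ^+ 2) = delta by rewrite /p divfK // gt_eqF.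
have p0 : 0 < p by rewrite /p divr_gt0.
have pe : p <= eps.
  have h4 : 1 <= 4 * M ^+ 2 * eps by nra.
  nra.
have hp : 0 <= p <= 1 by apply/andP; split; lra.
exists k.+1, k.+2, (sig k), (bern hq), (bern hp).
split => //; split; first exact: bern_supp.
split; first exact: bern_supp.
split; first by apply: bern_tv; rewrite /q; lra.
have EB (r : R) (hr : 0 <= r <= 1) : exp_sw (bern hr) (sig k) ord0 = ((k.+1)%:R * Tq r k.+2)%:E.
  by rewrite exp_sw_mu E_b.
have EA (r : R) (hr : 0 <= r <= 1) k' : exp_sw (bern hr) (sig k) (lift ord0 k') = (M * r - Tq r k.+2)%:E.
  by rewrite exp_sw_mu E_a.
have Mn : (k.+1)%:R = M - 1 by rewrite /M mulrS; ring.
move=> jj; case: (unliftP ord0 jj) => [k' ->|->] Hmax.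
  have T1 := @Tq_ge R q hq j hj; rewrite -km in T1.
  have := Hmax ord0; rewrite EB EA lee_fin Mn => H.
  exfalso; move: H; rewrite /q; nra.
have Hle : (exp_sw (bern hp) (sig k) (lift ord0 ord0) <= \big[maxe/-oo%E]_(k0 < k.+2) exp_sw (bern hp) (sig k) k0)%E.
  exact: le_bigmax.
apply: (lt_le_trans _ (lee_wpmul2l _ Hle)); last by rewrite lee_fin; exact: ltW.
rewrite EB EA -EFinM lte_fin Mn.
have Tp := @Tq_le R p hp k.+2; rewrite -/M in Tp.
have Tp0 : 0 <= Tq p k.+2 by apply: dE_ge0 => // s; exact: ler0n.
set T := Tq p k.+2 in Tp Tp0 *.
have u2 : M * (M * p) ^+ 2 = delta / 4 * (M * p).
  by rewrite -pM; field.
have h1 : (M - 1 + delta) * T <= M * (M * p) ^+ 2.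
  have a1 : 0 <= M - 1 + delta by lra.
  have a2 : 0 <= (M * p) ^+ 2 by exact: sqr_ge0.
  nra.
have h2 : 0 < delta * (M * p) by apply: mulr_gt0 => //; apply: mulr_gt0 => //; lra.
nra.
Qed.
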